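(* For all integers $s,d\geq 1$ there exists an integer $h'(s,d)$ such that the following holds. Let $S$ be a set of $s$ nonzero vectors in $\mathbb{R}^d$, and let $\mathcal{F}=\{U_1,\dots,U_n\}$ be a finite family where each $U_i$ is (the underlying set of) a polyhedral subcomplex of some polytope $P_i\subseteq\mathbb{R}^d$ which can be obtained as an intersection of half-spaces whose normal vectors belong to $S$. Then $\mathcal{F}$ has Helly number at most $h'(s,d)$.
   Context: A polytope is a bounded intersection of finitely many closed half-spaces; a polyhedral subcomplex of a polytope $P$ is a collection of faces of $P$ closed under taking faces. The Helly number of a family $\mathcal{F}$ of sets is defined as follows: if $\bigcap_{U\in\mathcal{F}}U=\emptyset$, it is the largest size of a subfamily $\mathcal{G}\subseteq\mathcal{F}$ such that $\bigcap\mathcal{G}=\emptyset$ but every proper subfamily of $\mathcal{G}$ has nonempty intersection; otherwise the Helly number is $1$. *)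

(* Defs.v *)
From HB Require Import structures.
From mathcomp Require Import all_boot all_order all_algebra.
From mathcomp Require Import boolp classical_sets.
From mathcomp Require Import Rstruct.
From Stdlib Require Rdefinitions.
Set Implicit Arguments. Unset Strict Implicit. Unset Printing Implicit Defensive.
Import Order.TTheory GRing.Theory Num.Theory.
Local Open Scope ring_scope.
Local Open Scope classical_set_scope.

Notation vec d := (matrix Rdefinitions.R 1 d).

Definition dotv (d : nat) (u v : vec d) : Rdefinitions.R := \sum_(i < d) u ord0 i * v ord0 i.

Definition halfspace (d : nat) (a : vec d) (b : Rdefinitions.R) : set (vec d) :=
  [set x | dotv a x <= b].

Definition bounded_set (d : nat) (P : set (vec d)) : Prop :=
  exists M : Rdefinitions.R, forall x, P x -> forall i : 'I_d, `|x ord0 i| <= M.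

Definition S_polytope (d : nat) (S : seq (vec d)) (P : set (vec d)) : Prop :=
  bounded_set P /\
  exists H : seq (vec d * Rdefinitions.R),
    (forall h, h \in H -> h.1 \in S) /\
    P = [set x | forall h, h \in H -> halfspace h.1 h.2 x].

(* F is a face of the (polytope) set P: F = P ∩ {c.x = delta} for a valid
   inequality c.x <= delta of P (includes P itself and the empty face) *)
Definition face (d : nat) (P F : set (vec d)) : Prop :=
  exists (c : vec d) (delta : Rdefinitions.R),
    (forall x, P x -> dotv c x <= delta) /\
    F = [set x | P x /\ dotv c x = delta].

Definition subcomplex (d : nat) (P : set (vec d)) (C : set (set (vec d))) : Prop :=
  (forall F, C F -> face P F) /\
  (forall F G, C F -> face F G -> C G).

Definition underlying (d : nat) (C : set (set (vec d))) : set (vec d) :=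
  [set x | exists F, C F /\ F x].

Definition fam_inter (T : Type) (n : nat) (U : 'I_n -> set T) (G : {set 'I_n}) : set T :=
  [set x | forall i, i \in G -> U i x].

Definition helly_critical (T : Type) (n : nat) (U : 'I_n -> set T) (G : {set 'I_n}) : Prop :=
  fam_inter U G = set0 /\
  (forall G' : {set 'I_n}, G' \proper G -> fam_inter U G' !=set0).

Definition helly_number (T : Type) (n : nat) (U : 'I_n -> set T) : nat :=
  if `[< fam_inter U [set: 'I_n] = set0 >]
  then \max_(G : {set 'I_n} | `[< helly_critical U G >]) #|G|
  else 1.

(* Main.v *)
Require Import Defs.
From mathcomp Require Import all_boot all_order all_algebra.
From mathcomp Require Import boolp classical_sets Rstruct.
From mathcomp Require Import ring lra zify.
From Stdlib Require Import Lia.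
Set Implicit Arguments. Unset Strict Implicit. Unset Printing Implicit Defensive.
Import Order.TTheory GRing.Theory Num.Theory.
Local Open Scope ring_scope.
Local Open Scope classical_set_scope.
Notation RR := Rdefinitions.R.
Definition mono (T : eqType) (f : T -> RR) (L : seq T) :=
  sorted (fun u v => f u < f v) L \/ sorted (fun u v => f v < f u) L \/
  sorted (fun u v => f u == f v) L.

Lemma tr_lt (T : eqType) (f : T -> RR) : transitive (fun u v => f u < f v).
Proof. by move=> y x z /= h1 h2; apply: lt_trans h1 h2. Qed.
Lemma tr_gt (T : eqType) (f : T -> RR) : transitive (fun u v => f v < f u).
Proof. by move=> y x z /= h1 h2; apply: lt_trans h2 h1. Qed.
Lemma tr_eq (T : eqType) (f : T -> RR) : transitive (fun u v => f u == f v).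
Proof. by move=> y x z /= /eqP -> /eqP ->. Qed.

Lemma count3 (T : eqType) (f : T -> RR) x (L : seq T) :
  (count (fun y => f x < f y)%R L + count (fun y => f y < f x)%R L +
   count (fun y => f y == f x) L)%N = size L.
Proof.
elim: L => //= y L IH; rewrite -IH.
case: (ltgtP (f x) (f y)) => h /=; lia.
Qed.

Lemma ES3_aux n : forall p q t, (p + q + t <= n)%N -> exists N, forall (T : eqType) (f : T -> RR) (L : seq T),
  (N <= size L)%N -> exists L', subseq L' L /\
   ((size L' = p /\ sorted (fun u v => f u < f v) L') \/
    (size L' = q /\ sorted (fun u v => f v < f u) L') \/
    (size L' = t /\ sorted (fun u v => f u == f v) L')).
Proof.
elim: n => [|n IH] p q t hpqt.
  exists 0%N => T f L _; exists [::]; split; first exact: sub0seq.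
  have -> : p = 0%N by lia. by left.
case: p hpqt => [|p] hpqt.
  exists 0%N => T f L _; exists [::]; split; first exact: sub0seq. by left.
case: q hpqt => [|q] hpqt.
  exists 0%N => T f L _; exists [::]; split; first exact: sub0seq. by right; left.
case: t hpqt => [|t] hpqt.
  exists 0%N => T f L _; exists [::]; split; first exact: sub0seq. by right; right.
have [N1 H1] := IH p q.+1 t.+1 ltac:(lia).
have [N2 H2] := IH p.+1 q t.+1 ltac:(lia).
have [N3 H3] := IH p.+1 q.+1 t ltac:(lia).
exists (N1 + N2 + N3).+1 => T f [|x L0] //= hs.
have hc := count3 f x L0.
have sub0 : forall L'', subseq L'' L0 -> subseq L'' (x :: L0).
  by move=> L'' h; apply: subseq_trans h (subseq_cons _ _).
have subx : forall L'', subseq L'' L0 -> subseq (x :: L'') (x :: L0).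
  by move=> L'' h /=; rewrite eqxx.
have [hg|hg] := leqP N1 (count (fun y => f x < f y) L0).
  have [L'' [s'' HL]] := H1 T f (filter (fun y => f x < f y) L0) ltac:(by rewrite size_filter).
  have s0 := subseq_trans s'' (filter_subseq _ _).
  case: HL => [[sz so]|[[sz so]|[sz so]]].
  - exists (x :: L''); split; first exact: subx.
    left; split; first by rewrite /= sz.
    rewrite /= (path_sortedE (@tr_lt T f)) so andbT.
    by apply/allP => y /(mem_subseq s''); rewrite mem_filter => /andP[].
  - by exists L''; split; [exact: sub0 | right; left].
  - by exists L''; split; [exact: sub0 | right; right].
have [hl|hl] := leqP N2 (count (fun y => f y < f x) L0).
  have [L'' [s'' HL]] := H2 T f (filter (fun y => f y < f x) L0) ltac:(by rewrite size_filter).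
  have s0 := subseq_trans s'' (filter_subseq _ _).
  case: HL => [[sz so]|[[sz so]|[sz so]]].
  - by exists L''; split; [exact: sub0 | left].
  - exists (x :: L''); split; first exact: subx.
    right; left; split; first by rewrite /= sz.
    rewrite /= (path_sortedE (@tr_gt T f)) so andbT.
    by apply/allP => y /(mem_subseq s''); rewrite mem_filter => /andP[].
  - by exists L''; split; [exact: sub0 | right; right].
have he : (N3 <= count (fun y => f y == f x) L0)%N by lia.
have [L'' [s'' HL]] := H3 T f (filter (fun y => f y == f x) L0) ltac:(by rewrite size_filter).
have s0 := subseq_trans s'' (filter_subseq _ _).
case: HL => [[sz so]|[[sz so]|[sz so]]].
- by exists L''; split; [exact: sub0 | left].
- by exists L''; split; [exact: sub0 | right; left].
- exists (x :: L''); split; first exact: subx.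
  right; right; split; first by rewrite /= sz.
  rewrite /= (path_sortedE (@tr_eq T f)) so andbT.
  apply/allP => y /(mem_subseq s''); rewrite mem_filter => /andP[/eqP -> _].
  by rewrite eqxx.
Qed.

Lemma ESmulti k : forall r, exists N, forall (A T : eqType) (S : seq A) (g : A -> T -> RR) (L : seq T),
  size S = k -> (N <= size L)%N -> exists L', subseq L' L /\ size L' = r /\
   forall a, a \in S -> mono (g a) L'.
Proof.
elim: k => [|k IH] r.
  exists r => A T [|//] g L _ hL; exists (take r L); split; first exact: take_subseq.
  by split; [exact: size_takel|].
have [N1 H1] := IH r.
have [N2 H2] := ES3_aux (leqnn (N1 + N1 + N1)).
exists N2 => A T [//|a0 S] g L [hS] hL.
have [L1 [s1 HL1]] := H2 T (g a0) L hL.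
have [sz1 m1] : size L1 = N1 /\ mono (g a0) L1.
  by case: HL1 => [[? ?]|[[? ?]|[? ?]]]; split => //; [left|right;left|right;right].
have [L2 [s2 [sz2 m2]]] := H1 A T S g L1 hS (eq_leq (esym sz1)).
exists L2; split; first exact: subseq_trans s2 s1.
split => // a; rewrite inE => /orP[/eqP ->|aS]; last exact: m2.
case: m1 => [h|[h|h]]; [left|right;left|right;right].
- exact: (subseq_sorted (@tr_lt T (g a0)) s2 h).
- exact: (subseq_sorted (@tr_gt T (g a0)) s2 h).
- exact: (subseq_sorted (@tr_eq T (g a0)) s2 h).
Qed.
Lemma dotv_lin d (a u w : vec d) (t : RR) :
  dotv a (u + t *: (u - w)) = dotv a u + t * (dotv a u - dotv a w).
Proof.
rewrite /dotv -sumrB mulr_sumr -big_split /=; apply: eq_bigr => i _.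
rewrite !mxE; ring.
Qed.

Lemma small_t (T : eqType) (l : seq T) (A B b : T -> RR) :
  (forall h, h \in l -> A h <= b h) -> (forall h, h \in l -> A h = b h -> B h = b h) ->
  exists t, 0 < t /\ forall h, h \in l -> A h + t * (A h - B h) <= b h.
Proof.
elim: l => [|h l IH] hA hT.
  by exists 1; split => // h.
have [t1 [t10 Ht1]] : exists t, 0 < t /\ forall h, h \in l -> A h + t * (A h - B h) <= b h.
  by apply: IH => k kl; [apply: hA | apply: hT]; rewrite inE kl orbT.
have hAh : A h <= b h by apply: hA; rewrite inE eqxx.
have mono_t : forall t, 0 < t -> t <= t1 -> forall k, k \in l -> A k + t * (A k - B k) <= b k.
  move=> t t0 tt1 k kl; have := Ht1 k kl; have : A k <= b k by apply: hA; rewrite inE kl orbT.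
  case: (lerP (A k - B k) 0) => hD h1 h2.
    have : t * (A k - B k) <= 0 by rewrite pmulr_rle0.
    lra.
  have : t * (A k - B k) <= t1 * (A k - B k) by rewrite ler_pM2r.
  lra.
case: (eqVneq (A h) (b h)) => eh.
  exists t1; split => // k; rewrite inE => /orP[/eqP ->|kl]; last exact: Ht1.
  rewrite (hT h _ eh) ?inE ?eqxx // eh; lra.
have lt : A h < b h by rewrite lt_neqAle eh hAh.
case: (lerP (A h - B h) 0) => hD.
  exists t1; split => // k; rewrite inE => /orP[/eqP ->|kl]; last exact: Ht1.
  have : t1 * (A h - B h) <= 0 by rewrite pmulr_rle0.
  lra.
set r := (b h - A h) / (A h - B h).
have r0 : 0 < r by rewrite divr_gt0 // subr_gt0.
exists (Order.min t1 r); split; first by rewrite lt_min t10 r0.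
move=> k; rewrite inE => /orP[/eqP ->|kl]; last first.
  by apply: mono_t => //; [rewrite lt_min t10 r0 | rewrite ge_min lexx].
have : Order.min t1 r * (A h - B h) <= r * (A h - B h).
  by rewrite ler_pM2r // ge_min lexx orbT.
have : r * (A h - B h) = b h - A h by rewrite /r divfK // gt_eqF.
lra.
Qed.

Lemma under_P d (P : set (vec d)) (C : set (set (vec d))) x :
  subcomplex P C -> underlying C x -> P x.
Proof.
move=> [hC _] [F [CF Fx]]; have [c [del [_ Fe]]] := hC F CF.
by move: Fx; rewrite Fe => -[].
Qed.

Definition mono4 (u v w z : RR) :=
  (u < v /\ v < w /\ w < z) \/ (v < u /\ w < v /\ z < w) \/ (u = v /\ v = w /\ w = z).

Lemma key d (S : seq (vec d)) (P : set (vec d)) (C : set (set (vec d))) (xi xj xl xm : vec d) :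
  S_polytope S P -> subcomplex P C ->
  underlying C xi -> underlying C xl -> underlying C xm ->
  (forall a, a \in S -> mono4 (dotv a xi) (dotv a xj) (dotv a xl) (dotv a xm)) ->
  underlying C xj.
Proof.
move=> [_ [H [HS PE]]] hsc ui ul um hmono.
have Pi := under_P hsc ui; have Pm := under_P hsc um.
have [F [CF Fl]] := ul.
have [c [del [hv Fe]]] := hsc.1 F CF.
move: (Fl); rewrite Fe => -[Pl cl].
move: Pi Pm Pl; rewrite PE /= => Pi Pm Pl.
have Pj : forall h, h \in H -> dotv h.1 xj <= h.2.
  move=> h hH; have := Pi h hH; have := Pl h hH; rewrite /halfspace /=.
  case: (hmono _ (HS h hH)) => [[? [? ?]]|[[? [? ?]]|[? [? ?]]]]; lra.
have tight : forall h, h \in H -> dotv h.1 xl = h.2 -> dotv h.1 xj = h.2.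
  move=> h hH e; have := Pi h hH; have := Pm h hH; rewrite /halfspace /=.
  case: (hmono _ (HS h hH)) => [[? [? ?]]|[[? [? ?]]|[? [? ?]]]]; lra.
have [t [t0 Ht]] := @small_t _ H (fun h => dotv h.1 xl) (fun h => dotv h.1 xj) (fun h => h.2)
  (fun h hH => Pl h hH) tight.
have Pq : P (xl + t *: (xl - xj)).
  by rewrite PE => h hH; rewrite /halfspace /= dotv_lin; apply: Ht.
have Pxj : P xj by rewrite PE => h hH; apply: Pj.
have h1 := hv _ Pq; rewrite dotv_lin cl in h1.
have h2 := hv _ Pxj.
have : t * (del - dotv c xj) <= 0 by lra.
rewrite pmulr_rle0 // => h3.
exists F; split => //; rewrite Fe; split => //; lra.
Qed.

Theorem corollary5 :
  forall s d : nat, (1 <= s)%N -> (1 <= d)%N ->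
  exists h' : nat,
    forall S : seq (vec d),
      uniq S -> size S = s -> (forall a, a \in S -> a != 0) ->
      forall (n : nat) (U : 'I_n -> set (vec d)),
        (forall i : 'I_n, exists (P : set (vec d)) (C : set (set (vec d))),
            S_polytope S P /\ subcomplex P C /\ U i = underlying C) ->
        (helly_number U <= h')%N.
Proof.
move=> s d _ _.
have [N HN] := ESmulti s 4.
exists N.+1 => S _ sS _ n U HU.
rewrite /helly_number; case: ifP => [/asboolP G0|//].
apply/bigmax_leqP => G /asboolP [GG Gmin].
case: (leqP #|G| N.+1) => // hG.
have hx : forall e : 'I_n, exists y : vec d, e \in G -> fam_inter U (G :\ e) y.
  move=> e; case: (boolP (e \in G)) => eG; last by exists 0.
  have [y Hy] := Gmin _ (properD1 eG); by exists y.
have [x Hx] := choice hx.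
have [L' [sub [sz Hm]]] := HN _ _ S (fun a e => dotv a (x e)) (enum G) sS
  ltac:(by rewrite -cardE; apply: ltnW; apply: ltnW).
have memG : forall e, e \in L' -> e \in G.
  by move=> e /(mem_subseq sub); rewrite mem_enum.
have uL := subseq_uniq sub (enum_uniq (mem G)).
case: L' sub sz Hm memG uL => [|i [|j [|l [|m [|]]]]] //= _ _ Hm memG uL.
have iG := memG i ltac:(by rewrite !inE eqxx ?orbT).
have jG := memG j ltac:(by rewrite !inE eqxx ?orbT).
have lG := memG l ltac:(by rewrite !inE eqxx ?orbT).
have mG := memG m ltac:(by rewrite !inE eqxx ?orbT).
move: uL; rewrite !inE !negb_or => /and4P[/and3P[ij il im] /andP[jl jm] lm _].
have inU : forall e f, e \in G -> f \in G -> f != e -> U f (x e).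
  by move=> e f eG fG fe; apply: (Hx e eG); rewrite !inE fe fG.
have [P [C [SP [sc UE]]]] := HU j.
have : underlying C (x j).
  apply: (@key d S P C (x i) (x j) (x l) (x m) SP sc).
  - by rewrite -UE; apply: inU => //; rewrite eq_sym.
  - by rewrite -UE; apply: inU.
  - by rewrite -UE; apply: inU.
  move=> a aS; move: (Hm a aS); rewrite /mono /= !andbT.
  case=> [/and3P[? ? ?]|[/and3P[? ? ?]|/and3P[/eqP ? /eqP ? /eqP ?]]]; rewrite /mono4.
  - by left.
  - by right; left.
  - by right; right.
rewrite -UE => Uj.
have : fam_inter U G (x j).
  move=> f fG; case: (eqVneq f j) => [->//|fj]; exact: inU.
by rewrite GG => -[].
Qed.
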